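(* Let $\{\tilde{\mathbf M}_t\}$ be a forward-in-time continuous-time Markov jump process on $\mathcal N$ whose generator on each interval $(t_d,t_{d+1}]$ is $\tilde{\boldsymbol\Lambda}^d$, started from any initial distribution. Let $C_t$ denote the number of type-$c$ haplotypes in $\tilde{\mathbf M}_t$, i.e. $C_t=n^{(c)}$ when $\tilde{\mathbf M}_t=\mathbf n$. Then $\{C_t\}$ is itself a (forward-in-time) Markov jump process on $\{0,1,\dots,n\}$ whose generator on $(t_d,t_{d+1}]$ is $\boldsymbol\Gamma^d$. Moreover, for all $m,m'\in\{0,\dots,n\}$ and $s\ge0$, and provided $\rho>0$, $$\gamma^d_m\big[e^{\boldsymbol\Gamma^d s}\big]_{m,m'}=\gamma^d_{m'}\big[e^{\boldsymbol\Gamma^d s}\big]_{m',m},$$ where $(\gamma^d_0,\dots,\gamma^d_n)$ is the stationary distribution of $\boldsymbol\Gamma^d$.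
   Context: **Two-locus model.** - There are two loci, the left (''$a$'') and the right (''$b$''). Alleles take values in a finite set $\mathcal A$. - Mutation occurs at rate $\theta/2$ per locus per lineage; given a mutation, allele $i$ becomes $j$ with probability $P_{ij}$, where $\mathbf P=(P_{ij})$ is a stochastic matrix on $\mathcal A$. The recombination parameter is $\rho\ge0$. - The population size is piecewise constant: there are times $-\infty=t_{-D}<t_{-D+1}<\dots<t_{-1}<t_0=0$, and on $(t_d,t_{d+1}]$ the scaled size is $\eta_d>0$. **Haplotypes and configurations.** - A haplotype is of type $a$, $b$ or $c$: - type $a$ is $(i,* )$; - type $b$ is $( *,j)$; - type $c$ is $(k,\ell)$; with $i,j,k,\ell\in\mathcal A$ and $*$ denoting a missing allele. - A configuration $\mathbf n=\{n_{i*},n_{*j},n_{k\ell}\}$ records the multiplicities of the haplotypes. Write $n^{(a)}=\sum_i n_{i*}$, $n^{(b)}=\sum_j n_{*j}$, $n^{(c)}=\sum_{k,\ell}n_{k\ell}$ and $n^{(abc)}=(n^{(a)},n^{(b)},n^{(c)})$. - $\mathbf e_h$ is the configuration consisting of a single haplotype $h$. **The space $\mathcal N$ and the generator $\tilde{\boldsymbol\Lambda}^d$.** - Fix $n\ge1$ and let $\mathcal N=\{\mathbf n: n^{(abc)}=(k,k,n-k),\ 0\le k\le n\}$. - $\tilde{\boldsymbol\Lambda}^d$ is the generator matrix indexed by $\mathcal N$. For $\mathbf m\ne\mathbf n$, its entry $\tilde\Lambda^d_{\mathbf n,\mathbf m}$ is the sum of all the following rates (over $i,j,k,l\in\mathcal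 A$) whose listed target equals $\mathbf m$: - target $\mathbf n-\mathbf e_{i*}+\mathbf e_{j*}$, rate $\frac1{\eta_d}n_{i*}\big(\tfrac12 n_{j*}+\sum_{k}n_{jk}\big)+\frac\theta2P_{ij}n_{i*}$; - target $\mathbf n-\mathbf e_{*i}+\mathbf e_{*j}$, rate $\frac1{\eta_d}n_{*i}\big(\tfrac12 n_{*j}+\sum_k n_{kj}\big)+\frac\theta2P_{ij}n_{*i}$; - target $\mathbf n-\mathbf e_{ij}+\mathbf e_{kl}$, rate $\frac1{2\eta_d}n_{ij}n_{kl}+\frac\theta2(\delta_{ik}P_{jl}+\delta_{jl}P_{ik})n_{ij}$; - target $\mathbf n-\mathbf e_{ij}+\mathbf e_{i*}+\mathbf e_{*j}$, rate $\frac\rho2 n_{ij}$; - target $\mathbf n-\mathbf e_{i*}-\mathbf e_{*j}+\mathbf e_{ij}$, rate $\frac1{\eta_d}n_{i*}n_{*j}$. - The diagonal entries are chosen so that each row of $\tilde{\boldsymbol\Lambda}^d$ sums to $0$. **The matrix $\boldsymbol\Gamma^d$.** $\boldsymbol\Gamma^d$ is the tridiagonal generator indexed by $\{0,1,\dots,n\}$ with - $\Gamma^d_{m,m-1}=\frac\rho2 m$, - $\Gamma^d_{m,m+1}=\frac{(n-m)^2}{\eta_d}$, - $\Gamma^d_{m,m}=-\Gamma^d_{m,m-1}-\Gamma^d_{m,m+1}$. *)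

(* Defs.v *)
From Stdlib Require Import Reals ClassicalEpsilon Factorial.
From mathcomp Require Import all_boot.
Set Implicit Arguments. Unset Strict Implicit. Unset Printing Implicit Defensive.

Local Open Scope R_scope.

Definition mat (S : finType) := S -> S -> R.

Definition mmul (S : finType) (M1 M2 : mat S) : mat S :=
  fun i j => \big[Rplus/0]_(k : S) (M1 i k * M2 k j).

Definition mid (S : finType) : mat S := fun i j => if i == j then 1 else 0.

Definition mpow (S : finType) (Q : mat S) (k : nat) : mat S :=
  iter k (fun M => mmul M Q) (@mid S).

(* matrix exponential e^{Q s}, entrywise the sum of the series
   sum_k s^k/k! (Q^k)_{ij} (the series always converges). *)
Definition mexp (S : finType) (Q : mat S) (s : R) : mat S :=
  fun i j => epsilon (inhabits 0)
    (fun v => infinite_sum (fun k => s ^ k / INR (Factorial.fact k) * mpow Q k i j) v).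

(* Epochs are re-indexed d = 0..D-1 (paper's d = -D..-1).  Epoch d is the
   interval (lo d, hi d] with lo 0 = -infinity, lo d = tb d (d >= 1),
   hi d = tb (d+1) if d+1 < D, and hi (D-1) = 0 (= t_0). *)
Definition epoch_hi (D : nat) (tb : nat -> R) (d : nat) : R :=
  if (d.+1 < D)%N then tb d.+1 else 0.

(* length of (u,t] intersected with epoch d *)
Definition epoch_len (D : nat) (tb : nat -> R) (u t : R) (d : nat) : R :=
  Rmax 0 (Rmin t (epoch_hi D tb d) - (if d == 0%N then u else Rmax u (tb d))).

Fixpoint trans_upto (S : finType) (D : nat) (tb : nat -> R) (G : nat -> mat S)
    (u t : R) (k : nat) : mat S :=
  match k with
  | 0%N => @mid S
  | k'.+1 => mmul (trans_upto D tb G u t k') (mexp (G k') (epoch_len D tb u t k'))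
  end.

(* transition matrix P(u,t) of the Markov jump process whose generator on
   epoch d is G d *)
Definition trans (S : finType) (D : nat) (tb : nat -> R) (G : nat -> mat S)
    (u t : R) : mat S := trans_upto D tb G u t D.

(* lprob f Pt t0 x0 ts cs = P( f(X_{t_1}) = c_1, ..., f(X_{t_k}) = c_k | X_{t0} = x0 )
   for the Markov process with transition matrices Pt. *)
Fixpoint lprob (S T : finType) (f : S -> T) (Pt : R -> R -> mat S)
    (t0 : R) (x0 : S) (ts : seq R) (cs : seq T) : R :=
  match ts, cs with
  | t :: ts', c :: cs' =>
      \big[Rplus/0]_(x : S | f x == c) (Pt t0 t x0 x * lprob f Pt t x ts' cs')
  | [::], [::] => 1
  | _, _ => 0
  end.

(* law of (f(X_{t_1}),...,f(X_{t_k})) when X_u has distribution pi *)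
Definition fdd (S T : finType) (f : S -> T) (Pt : R -> R -> mat S) (u : R)
    (pi : S -> R) (ts : seq R) (cs : seq T) : R :=
  \big[Rplus/0]_(x0 : S) (pi x0 * lprob f Pt u x0 ts cs).

Definition pushfwd (S T : finType) (f : S -> T) (pi : S -> R) : T -> R :=
  fun c => \big[Rplus/0]_(x : S | f x == c) pi x.

Fixpoint times_ok (u : R) (ts : seq R) : Prop :=
  match ts with
  | [::] => True
  | t :: ts' => u <= t <= 0 /\ times_ok t ts'
  end.

(* inl (inl i) = haplotype (i,-) type a ; inl (inr j) = (-,j) type b ; inr (k,l) type c *)
Definition hap (A : finType) : finType := (A + A + A * A)%type.
Definition ha (A : finType) (i : A) : hap A := inl (inl i).
Definition hb (A : finType) (j : A) : hap A := inl (inr j).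
Definition hc (A : finType) (k l : A) : hap A := inr (k, l).

(* multiplicities, each at most n *)
Definition cfg (A : finType) (n : nat) := {ffun hap A -> 'I_n.+1}.

Definition na A n (x : cfg A n) : nat := (\sum_(i : A) x (ha i))%N.
Definition nb A n (x : cfg A n) : nat := (\sum_(j : A) x (hb j))%N.
Definition nc A n (x : cfg A n) : nat := (\sum_(p : A * A) x (hc p.1 p.2))%N.

(* n^{(abc)} = (k, k, n-k) *)
Definition inN A n (x : cfg A n) : bool := (na x == nb x) && (na x + nc x == n)%N.

Definition Nsp (A : finType) (n : nat) := {x : cfg A n | inN x}.

(* y = x - sum_{h in rem} e_h + sum_{h in add} e_h  (as nat equations) *)
Definition mv A n (x y : cfg A n) (rem add : seq (hap A)) : bool :=
  [forall h, (y h + count_mem h rem == x h + count_mem h add)%N].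

Definition ind (b : bool) : R := if b then 1 else 0.

Definition cnt A n (x : Nsp A n) (h : hap A) : R := INR (val x h).

Definition Lam_off (A : finType) (n : nat) (theta rho : R) (P : A -> A -> R)
    (eta : R) (x y : Nsp A n) : R :=
  let X := val x in let Y := val y in let c := cnt x in
    \big[Rplus/0]_(i : A) \big[Rplus/0]_(j : A)
      (ind (mv X Y [:: ha i] [:: ha j]) *
        (/ eta * (c (ha i) * (/ 2 * c (ha j) + \big[Rplus/0]_(k : A) c (hc j k)))
         + theta / 2 * P i j * c (ha i)))
  + \big[Rplus/0]_(i : A) \big[Rplus/0]_(j : A)
      (ind (mv X Y [:: hb i] [:: hb j]) *
        (/ eta * (c (hb i) * (/ 2 * c (hb j) + \big[Rplus/0]_(k : A) c (hc k j)))
         + theta / 2 * P i j * c (hb i)))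
  + \big[Rplus/0]_(i : A) \big[Rplus/0]_(j : A) \big[Rplus/0]_(k : A) \big[Rplus/0]_(l : A)
      (ind (mv X Y [:: hc i j] [:: hc k l]) *
        (/ (2 * eta) * c (hc i j) * c (hc k l)
         + theta / 2 * (ind (i == k) * P j l + ind (j == l) * P i k) * c (hc i j)))
  + \big[Rplus/0]_(i : A) \big[Rplus/0]_(j : A)
      (ind (mv X Y [:: hc i j] [:: ha i; hb j]) * (rho / 2 * c (hc i j)))
  + \big[Rplus/0]_(i : A) \big[Rplus/0]_(j : A)
      (ind (mv X Y [:: ha i; hb j] [:: hc i j]) * (/ eta * c (ha i) * c (hb j))).

Definition Lam (A : finType) (n : nat) (theta rho : R) (P : A -> A -> R)
    (eta : R) : mat (Nsp A n) :=
  fun x y => if x == y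
    then - \big[Rplus/0]_(z : Nsp A n | z != x) Lam_off theta rho P eta x z
    else Lam_off theta rho P eta x y.

Definition ccount (A : finType) (n : nat) (x : Nsp A n) : 'I_n.+1 := inord (nc (val x)).

Definition Gam (n : nat) (rho eta : R) : mat 'I_n.+1 :=
  fun m m' =>
    let down := rho / 2 * INR m in
    let up := (INR (n - m)) ^ 2 / eta in
    if (m' : nat) == m.+1 then up
    else if ((m' : nat).+1 == m) then down
    else if m' == m then - down - up
    else 0.

(* Main.v *)
Require Import Defs.
From Stdlib Require Import Reals Lra ClassicalEpsilon.
From HB Require Import structures.
From mathcomp Require Import all_boot.
Set Implicit Arguments. Unset Strict Implicit. Unset Printing Implicit Defensive.
Local Open Scope R_scope.

HB.instance Definition _ := Monoid.isComLaw.Build R 0 Rplus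
  (fun x y z => esym (Rplus_assoc x y z)) Rplus_comm Rplus_0_l.
HB.instance Definition _ := Monoid.isComLaw.Build R 1 Rmult
  (fun x y z => esym (Rmult_assoc x y z)) Rmult_comm Rmult_1_l.
HB.instance Definition _ := Monoid.isMulLaw.Build R 0 Rmult Rmult_0_l Rmult_0_r.
HB.instance Definition _ := Monoid.isAddLaw.Build R Rmult Rplus
  Rmult_plus_distr_r Rmult_plus_distr_l.

Lemma sum_le (I : Type) (r : seq I) (P : pred I) (F G : I -> R) :
  (forall i, P i -> F i <= G i) ->
  \big[Rplus/0]_(i <- r | P i) F i <= \big[Rplus/0]_(i <- r | P i) G i.
Proof.
move=> H; apply: (big_ind2 (fun a b => a <= b)); first lra.
  by move=> a b c d; lra.
exact: H.
Qed.

Lemma sum_ge0 (I : Type) (r : seq I) (P : pred I) (F : I -> R) :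
  (forall i, P i -> 0 <= F i) -> 0 <= \big[Rplus/0]_(i <- r | P i) F i.
Proof.
move=> H; apply: (big_ind (fun a => 0 <= a)); first lra.
  by move=> a b; lra.
exact: H.
Qed.

Lemma sum_abs (I : Type) (r : seq I) (P : pred I) (F : I -> R) :
  Rabs (\big[Rplus/0]_(i <- r | P i) F i) <= \big[Rplus/0]_(i <- r | P i) Rabs (F i).
Proof.
apply: (big_ind2 (fun a b => Rabs a <= b)).
- rewrite Rabs_R0; lra.
- move=> a b c d H1 H2; have := Rabs_triang a c; lra.
- move=> i _; lra.
Qed.

Lemma single_le (S : finType) (F : S -> R) (i : S) :
  (forall j, 0 <= F j) -> F i <= \big[Rplus/0]_(j : S) F j.
Proof.
move=> H; rewrite (bigD1 i) //=.
have := @sum_ge0 _ (index_enum S) (fun j => j != i) F (fun j _ => H j); lra.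
Qed.

Definition mbound (S : finType) (Q : mat S) := \big[Rplus/0]_(i : S) \big[Rplus/0]_(j : S) Rabs (Q i j).

Lemma mbound_ge0 S (Q : mat S) : 0 <= mbound Q.
Proof. apply: sum_ge0 => i _; apply: sum_ge0 => j _; exact: Rabs_pos. Qed.

Lemma mpow_bound S (Q : mat S) k i j : Rabs (mpow Q k i j) <= mbound Q ^ k.
Proof.
elim: k i j => [|k IH] i j /=.
  rewrite /mid; case: (i == j); rewrite ?Rabs_R1 ?Rabs_R0; lra.
rewrite /mmul.
apply: Rle_trans (sum_abs _ _ _) _.
apply: (@Rle_trans _ (\big[Rplus/0]_(l : S) (mbound Q ^ k * Rabs (Q l j))) _).
  apply: sum_le => l _; rewrite Rabs_mult; apply: Rmult_le_compat_r; first exact: Rabs_pos.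
  exact: IH.
rewrite -big_distrr /= Rmult_comm; apply: Rmult_le_compat_r.
  apply: pow_le; exact: mbound_ge0.
apply: sum_le => l _.
refine (@single_le _ (fun j' => Rabs (Q l j')) j _) => j'; exact: Rabs_pos.
Qed.


Lemma inf_ext (f g : nat -> R) a : (forall k, f k = g k) -> infinite_sum f a -> infinite_sum g a.
Proof.
move=> H Hf e he; case: (Hf e he) => N HN; exists N => n hn.
rewrite -(@PartSum.sum_eq f g); first exact: HN.
by move=> i _; apply: H.
Qed.

Lemma inf_plus (f g : nat -> R) a b : infinite_sum f a -> infinite_sum g b ->
  infinite_sum (fun k => f k + g k) (a + b).
Proof.
move=> Hf Hg.
have := CV_plus _ _ _ _ (Hf : Un_cv (sum_f_R0 f) a) (Hg : Un_cv (sum_f_R0 g) b).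
move=> Hc e he; case: (Hc e he) => N HN; exists N => n hn.
by rewrite sum_plus; apply: HN.
Qed.

Lemma inf_scal (f : nat -> R) a c : infinite_sum f a ->
  infinite_sum (fun k => c * f k) (c * a).
Proof.
move=> Hf.
have Hc : Un_cv (fun _ => c) c.
  by move=> e he; exists 0%nat => n _; rewrite /Rdist Rminus_eq_0 Rabs_R0.
have := CV_mult _ _ _ _ Hc (Hf : Un_cv (sum_f_R0 f) a).
move=> H e he; case: (H e he) => N HN; exists N => n hn.
rewrite -(@PartSum.sum_eq (fun k => f k * c)); last by move=> i _; rewrite Rmult_comm.
by rewrite -scal_sum; apply: HN.
Qed.

Lemma inf_zero : infinite_sum (fun _ => 0) 0.
Proof.
move=> e he; exists 0%nat => n _.
have -> : sum_f_R0 (fun _ => 0) n = 0.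
  elim: n => [|n IH] //=; rewrite IH; lra.
by rewrite /Rdist Rminus_eq_0 Rabs_R0.
Qed.

Lemma inf_uniq (f : nat -> R) a b : infinite_sum f a -> infinite_sum f b -> a = b.
Proof. move=> Ha Hb; exact: (UL_sequence (sum_f_R0 f) a b Ha Hb). Qed.

Lemma abs_conv (a b : nat -> R) : (forall k, Rabs (a k) <= b k) ->
  {l | Un_cv (fun N => sum_f_R0 b N) l} -> exists l, infinite_sum a l.
Proof.
move=> H Hb.
have [l1 H1] : {l | Un_cv (fun N => sum_f_R0 (fun k => a k + Rabs (a k)) N) l}.
  apply: (Rseries_CV_comp _ (fun k => 2 * b k)).
    move=> k; have := H k; split.
      by case: (Rcase_abs (a k)) => h; [rewrite Rabs_left | rewrite Rabs_right]; lra.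
    have := Rle_abs (a k); lra.
  case: Hb => l Hl; exists (2 * l); exact: (inf_scal 2 Hl).
have [l2 H2] : {l | Un_cv (fun N => sum_f_R0 (fun k => Rabs (a k)) N) l}.
  apply: (Rseries_CV_comp _ b) => // k; split; [exact: Rabs_pos | exact: H].
exists (l1 + -1 * l2).
apply: inf_ext (inf_plus (H1 : infinite_sum _ l1) (inf_scal (-1) (H2 : infinite_sum _ l2))).
move=> k /=; lra.
Qed.

Lemma mexp_spec S (Q : mat S) s i j :
  infinite_sum (fun k => s ^ k / INR (Factorial.fact k) * mpow Q k i j) (mexp Q s i j).
Proof.
rewrite /mexp; apply: epsilon_spec.
apply: (abs_conv (b := fun k => / INR (Factorial.fact k) * (Rabs s * mbound Q) ^ k)).
  move=> k; rewrite Rabs_mult /Rdiv Rabs_mult Rpow_mult_distr -RPow_abs.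
  rewrite (Rabs_right (/ _)); last by apply: Rle_ge; apply: Rlt_le; apply: Rinv_0_lt_compat; apply: INR_fact_lt_0.
  have h1 := mpow_bound Q k i j.
  have h2 : 0 <= Rabs s ^ k by apply: pow_le; apply: Rabs_pos.
  have h3 : 0 <= / INR (Factorial.fact k) by apply: Rlt_le; apply: Rinv_0_lt_compat; apply: INR_fact_lt_0.
  have := Rmult_le_compat_l _ _ _ (Rmult_le_pos _ _ h2 h3) h1; lra.
exact: exist_exp.
Qed.

Lemma inf_big (I : Type) (r : seq I) (P : pred I) (F : I -> nat -> R) (l : I -> R) :
  (forall i, P i -> infinite_sum (F i) (l i)) ->
  infinite_sum (fun k => \big[Rplus/0]_(i <- r | P i) F i k) (\big[Rplus/0]_(i <- r | P i) l i).
Proof.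
move=> H; elim: r => [|i r IH].
  rewrite big_nil; apply: inf_ext inf_zero => k; by rewrite big_nil.
rewrite big_cons; case Pi: (P i).
  apply: inf_ext (inf_plus (H i Pi) IH) => k; by rewrite big_cons Pi.
apply: inf_ext IH => k; by rewrite big_cons Pi.
Qed.

Section Lump.
Variables (S T : finType) (f : S -> T).

Definition lump (M : mat S) (N : mat T) :=
  forall x c, \big[Rplus/0]_(y | f y == c) M x y = N (f x) c.

Lemma mid_lump : lump (@mid S) (@mid T).
Proof.
move=> x c; rewrite /mid.
case: (eqVneq (f x) c) => [<-|ne].
  rewrite (bigD1 x) //= eqxx big1 ?Rplus_0_r // => y /andP[_ ne]; by rewrite eq_sym (negbTE ne).
rewrite big1 //= => y /eqP fy; case: eqP => // e; subst y; by rewrite fy eqxx in ne.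
Qed.

Lemma mmul_lump M1 M2 N1 N2 : lump M1 N1 -> lump M2 N2 -> lump (mmul M1 M2) (mmul N1 N2).
Proof.
move=> H1 H2 x c; rewrite /mmul.
rewrite exchange_big /=.
under eq_bigr => z _ do rewrite -big_distrr /= H2.
rewrite (partition_big (fun z => f z) predT) //=.
apply: eq_bigr => c' _.
rewrite -H1 big_distrl /=; apply: eq_bigr => z /eqP <-; done.
Qed.

Lemma mpow_lump Q G : lump Q G -> forall k, lump (mpow Q k) (mpow G k).
Proof.
move=> H; elim => [|k IH] /=; first exact: mid_lump.
exact: mmul_lump.
Qed.

Lemma mexp_lump Q G : lump Q G -> forall s, lump (mexp Q s) (mexp G s).
Proof.
move=> H s x c.
apply: (@inf_uniq (fun k => s ^ k / INR (Factorial.fact k) * mpow G k (f x) c)); last exact: mexp_spec.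
have := @inf_big _ (index_enum S) (fun y => f y == c)
  (fun y k => s ^ k / INR (Factorial.fact k) * mpow Q k x y) (fun y => mexp Q s x y) (fun y _ => mexp_spec Q s x y).
apply: inf_ext => k.
by rewrite -big_distrr /= (mpow_lump H).
Qed.

Lemma trans_lump D tb (GL : nat -> mat S) (GG : nat -> mat T) :
  (forall d, lump (GL d) (GG d)) -> forall u t, lump (trans D tb GL u t) (trans D tb GG u t).
Proof.
move=> H u t; rewrite /trans; elim: {2 4}D => [|k IH] /=; first exact: mid_lump.
apply: mmul_lump => //; exact: mexp_lump.
Qed.

Lemma lprob_lump (PL : R -> R -> mat S) (PG : R -> R -> mat T) :
  (forall u t, lump (PL u t) (PG u t)) ->
  forall ts cs t0 x0, lprob f PL t0 x0 ts cs = lprob (fun m : T => m) PG t0 (f x0) ts cs.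
Proof.
move=> H; elim => [|t ts IH] [|c cs] t0 x0 //=.
under eq_bigr => x /eqP fx do rewrite IH fx.
rewrite -big_distrl /= H.
by rewrite big_pred1_eq.
Qed.

Lemma fdd_lump (PL : R -> R -> mat S) (PG : R -> R -> mat T) :
  (forall u t, lump (PL u t) (PG u t)) ->
  forall u pi ts cs, fdd f PL u pi ts cs = fdd (fun m : T => m) PG u (pushfwd f pi) ts cs.
Proof.
move=> H u pi ts cs; rewrite /fdd /pushfwd.
under eq_bigr => x _ do rewrite (lprob_lump H).
rewrite (partition_big (fun z => f z) predT) //=.
apply: eq_bigr => c _; rewrite big_distrl /=.
by apply: eq_bigr => z /eqP ->.
Qed.
End Lump.

From Stdlib Require Import FunctionalExtensionality.

Section Rev.
Variable S : finType.

Lemma mmul_assoc (A B C : mat S) : mmul (mmul A B) C = mmul A (mmul B C).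
Proof.
apply: functional_extensionality => i; apply: functional_extensionality => j.
rewrite /mmul.
under eq_bigr => k _ do rewrite big_distrl /=.
rewrite exchange_big /=; apply: eq_bigr => l _.
rewrite big_distrr /=; apply: eq_bigr => k _; by rewrite Rmult_assoc.
Qed.

Lemma mmul_1l (A : mat S) : mmul (@mid S) A = A.
Proof.
apply: functional_extensionality => i; apply: functional_extensionality => j.
rewrite /mmul /mid (bigD1 i) //= eqxx Rmult_1_l big1 ?Rplus_0_r // => l ne.
by rewrite eq_sym (negbTE ne) Rmult_0_l.
Qed.

Lemma mmul_1r (A : mat S) : mmul A (@mid S) = A.
Proof.
apply: functional_extensionality => i; apply: functional_extensionality => j.
rewrite /mmul /mid (bigD1 j) //= eqxx Rmult_1_r big1 ?Rplus_0_r // => l ne.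
by rewrite (negbTE ne) Rmult_0_r.
Qed.

Lemma mpowSl (Q : mat S) k : mpow Q k.+1 = mmul Q (mpow Q k).
Proof.
elim: k => [|k IH]; first by rewrite /= mmul_1l mmul_1r.
rewrite (_ : mpow Q k.+2 = mmul (mpow Q k.+1) Q) // {1}IH mmul_assoc; reflexivity.
Qed.

Lemma mpow_rev (Q : mat S) (g : S -> R) :
  (forall a b, g a * Q a b = g b * Q b a) ->
  forall k a b, g a * mpow Q k a b = g b * mpow Q k b a.
Proof.
move=> H; elim => [|k IH] a b.
  rewrite /= /mid eq_sym; case: eqP => [->|]; lra.
rewrite {2}mpowSl [mpow Q k.+1]/= /mmul !big_distrr /=.
apply: eq_bigr => l _.
rewrite -Rmult_assoc IH Rmult_assoc (Rmult_comm (mpow Q k l a)) -Rmult_assoc H; ring.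
Qed.

Lemma mexp_rev (Q : mat S) (g : S -> R) :
  (forall a b, g a * Q a b = g b * Q b a) ->
  forall s a b, g a * mexp Q s a b = g b * mexp Q s b a.
Proof.
move=> H s a b.
apply: (@inf_uniq (fun k => g a * (s ^ k / INR (Factorial.fact k) * mpow Q k a b))).
  exact: inf_scal (mexp_spec Q s a b).
apply: inf_ext (inf_scal (g b) (mexp_spec Q s b a)) => k.
have E := mpow_rev H k a b; set X := s ^ k / _; clearbody X.
transitivity (X * (g b * mpow Q k b a)); first ring.
rewrite -E; ring.
Qed.
End Rev.

From mathcomp Require Import zify.

Lemma sum_pick N (F : 'I_N -> R) (P : pred 'I_N) (m0 : 'I_N) :
  (forall m, P m = (m == m0)) -> \big[Rplus/0]_(m : 'I_N) (if P m then F m else 0) = F m0.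
Proof.
move=> H; rewrite (bigD1 m0) //= H eqxx big1 ?Rplus_0_r // => m ne.
by rewrite H (negbTE ne).
Qed.

Lemma sum_none N (F : 'I_N -> R) (P : pred 'I_N) :
  (forall m, P m = false) -> \big[Rplus/0]_(m : 'I_N) (if P m then F m else 0) = 0.
Proof. move=> H; rewrite big1 // => m _; by rewrite H. Qed.

Section GamSec.
Variables (n : nat) (rho eta : R).
Definition gu (k : nat) := INR (n - k) ^ 2 / eta.
Definition gd (k : nat) := rho / 2 * INR k.

Lemma Gam_split (m m' : 'I_n.+1) : @Gam n rho eta m m' =
  (if (m' : nat) == m.+1 then gu m else 0) + (if (m' : nat).+1 == m then gd m else 0)
  + (if (m' : nat) == m then - gd m - gu m else 0).
Proof.
rewrite /Gam /gu /gd -[m' == m]/((m' : nat) == m).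
case: (eqVneq (m' : nat) m.+1) => e1.
  have -> : ((m' : nat).+1 == m) = false by lia.
  have -> : ((m' : nat) == m) = false by lia.
  ring.
case: (eqVneq (m' : nat).+1 m) => e2.
  have -> : ((m' : nat) == m) = false by lia.
  ring.
case: (eqVneq (m' : nat) m) => e3; ring.
Qed.

Variable gam : 'I_n.+1 -> R.
Definition gg (k : nat) := gam (inord k).

Lemma gam_gg (m : 'I_n.+1) : gam m = gg m.
Proof. by rewrite /gg inord_val. Qed.

Lemma col_eq (j : 'I_n.+1) :
  \big[Rplus/0]_(m : 'I_n.+1) (gam m * @Gam n rho eta m j) =
  (if (0 < j)%N then gg j.-1 * gu j.-1 else 0)
  + (if (j < n)%N then gg j.+1 * gd j.+1 else 0) + gg j * (- gd j - gu j).
Proof.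
under eq_bigr => m _ do rewrite Gam_split !Rmult_plus_distr_l.
rewrite !big_split /=.
congr (_ + _ + _).
- case: (posnP j) => [j0|jp].
    rewrite big1 // => m _; rewrite j0 /=; ring.
  have jl : (j.-1 < n.+1)%N by have := ltn_ord j; lia.
  rewrite (eq_bigr (fun m : 'I_n.+1 => if (j:nat) == m.+1 then gam m * gu m else 0)); last first.
    by move=> m _; case: ifP => _; ring.
  rewrite (@sum_pick _ _ _ (Ordinal jl)); first by rewrite gam_gg.
  move=> m; rewrite -val_eqE /=; lia.
- case: (ltnP j n) => [jl|jg].
    have jl' : (j.+1 < n.+1)%N by lia.
    rewrite (eq_bigr (fun m : 'I_n.+1 => if (j:nat).+1 == m then gam m * gd m else 0)); last first.
      by move=> m _; case: ifP => _; ring.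
    rewrite (@sum_pick _ _ _ (Ordinal jl')); first by rewrite gam_gg.
    move=> m; rewrite -val_eqE /=; lia.
  rewrite big1 // => m _; case: eqP => [e|_]; last ring.
  have := ltn_ord m; lia.
- rewrite (eq_bigr (fun m : 'I_n.+1 => if (j:nat) == m then gam m * (- gd m - gu m) else 0)); last first.
    by move=> m _; case: ifP => _; ring.
  rewrite (@sum_pick _ _ _ j); first by rewrite gam_gg.
  by move=> m; rewrite -val_eqE /= eq_sym.
Qed.

Hypothesis stat : forall m', \big[Rplus/0]_(m : 'I_n.+1) (gam m * @Gam n rho eta m m') = 0.

Lemma balance k : (k < n)%N -> gg k * gu k = gg k.+1 * gd k.+1.
Proof.
elim: k => [|k IH] kn.
  have := stat (inord 0); rewrite col_eq inordK //= ifT //.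
  rewrite /gd /=; lra.
have := stat (inord k.+1); rewrite col_eq inordK; last lia.
rewrite /= ifT // IH; last lia.
lra.
Qed.

Lemma detailed (m m' : 'I_n.+1) : gam m * @Gam n rho eta m m' = gam m' * @Gam n rho eta m' m.
Proof.
rewrite !Gam_split !gam_gg.
have hm := ltn_ord m; have hm' := ltn_ord m'.
case: (eqVneq (m' : nat) m.+1) => e1.
  rewrite e1; repeat (case: ifP => ?; try lia).
  rewrite !Rplus_0_r Rplus_0_l; apply: balance; lia.
case: (eqVneq (m' : nat).+1 m) => e2.
  rewrite -e2; repeat (case: ifP => ?; try lia).
  rewrite !Rplus_0_r Rplus_0_l; symmetry; apply: balance; lia.
case: (eqVneq (m' : nat) m) => e3.
  by rewrite e3.
repeat (case: ifP => ?; try lia).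
ring.
Qed.
End GamSec.

Section Hap.
Variables (A : finType) (n : nat).

Definition wa (h : hap A) : nat := match h with inl (inl _) => 1%N | _ => 0%N end.
Definition wb (h : hap A) : nat := match h with inl (inr _) => 1%N | _ => 0%N end.
Definition wc (h : hap A) : nat := match h with inr _ => 1%N | _ => 0%N end.

Definition Sw (w : hap A -> nat) (f : hap A -> nat) : nat := (\sum_(h : hap A) w h * f h)%N.

Lemma Sw_a (X : cfg A n) : Sw wa (fun h => X h) = na X.
Proof.
rewrite /Sw /hap big_sumType big_sumType /=.
rewrite [X in (_ + X + _)%N]big1 // [X in (_ + X)%N]big1 // !addn0.
by apply: eq_bigr => i _; rewrite mul1n.
Qed.

Lemma Sw_b (X : cfg A n) : Sw wb (fun h => X h) = nb X.
Proof.
rewrite /Sw /hap big_sumType big_sumType /=.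
rewrite [X in (X + _ + _)%N]big1 // [X in (_ + X)%N]big1 // add0n addn0.
by apply: eq_bigr => i _; rewrite mul1n.
Qed.

Lemma Sw_c (X : cfg A n) : Sw wc (fun h => X h) = nc X.
Proof.
rewrite /Sw /hap big_sumType big_sumType /=.
rewrite [X in (X + _ + _)%N]big1 // [X in (_ + X + _)%N]big1 // !add0n.
by apply: eq_bigr => [[i j]] _; rewrite mul1n.
Qed.

Definition sl (w : hap A -> nat) (s : seq (hap A)) : nat := (\sum_(z <- s) w z)%N.

Lemma Sw_cm w (s : seq (hap A)) : Sw w (fun h => count_mem h s) = sl w s.
Proof.
elim: s => [|z s IH]; rewrite /Sw.
  by rewrite /sl big_nil big1 // => h _; rewrite muln0.
rewrite /sl big_cons -/(sl w s) -IH /Sw.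
rewrite (eq_bigr (fun h => w h * (z == h) + w h * count_mem h s)%N); last first.
  by move=> h _; rewrite /= mulnDr.
rewrite big_split /=; congr (_ + _)%N.
rewrite (bigD1 z) //= eqxx muln1 big1 ?addn0 // => h ne.
by rewrite eq_sym (negbTE ne) muln0.
Qed.

Lemma Sw_inv w (f g : hap A -> nat) (rem add : seq (hap A)) :
  (forall h, g h + count_mem h rem = f h + count_mem h add)%N ->
  (Sw w g + sl w rem = Sw w f + sl w add)%N.
Proof.
move=> H; rewrite -!Sw_cm /Sw -!big_split /=; apply: eq_bigr => h _.
by rewrite -!mulnDr H.
Qed.

Lemma Sw_single w (f : hap A -> nat) h : w h = 1%N -> (f h <= Sw w f)%N.
Proof.
move=> wh; rewrite /Sw (bigD1 h) //= wh mul1n; exact: leq_addr.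
Qed.

Lemma hap_cover (h : hap A) : wa h = 1%N \/ wb h = 1%N \/ wc h = 1%N.
Proof. by case: h => [[i|j]|p]; auto. Qed.

Lemma mvP (X Y : cfg A n) rem add :
  reflect (forall h, Y h + count_mem h rem = X h + count_mem h add)%N (mv X Y rem add).
Proof.
apply: (iffP forallP) => H h; first by apply/eqP; apply: H.
by apply/eqP; apply: H.
Qed.

Lemma mv_inv w (X Y : cfg A n) rem add : mv X Y rem add ->
  (Sw w (fun h => Y h) + sl w rem = Sw w (fun h => X h) + sl w add)%N.
Proof. by move/mvP; apply: Sw_inv. Qed.

Lemma mv_uniq (X Y1 Y2 : cfg A n) rem add : mv X Y1 rem add -> mv X Y2 rem add -> Y1 = Y2.
Proof.
move=> /mvP H1 /mvP H2; apply/ffunP => h; apply: val_inj => /=.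
have := H1 h; rewrite -(H2 h) => /eqP; rewrite eqn_add2r => /eqP //.
Qed.

Lemma Nsp_ab (x : Nsp A n) : na (val x) = nb (val x).
Proof. by case: x => X /= /andP[/eqP]. Qed.

Lemma Nsp_ac (x : Nsp A n) : (na (val x) + nc (val x) = n)%N.
Proof. by case: x => X /= /andP[_ /eqP]. Qed.

Lemma ccountE (x : Nsp A n) : (ccount x : nat) = nc (val x).
Proof. rewrite /ccount inordK //; have := Nsp_ac x; lia. Qed.

Lemma mv_exists (x : Nsp A n) rem add :
  (forall h, count_mem h rem <= val x h)%N ->
  forall v : hap A -> nat, (forall h, v h = (val x h + count_mem h add - count_mem h rem)%N) ->
  Sw wa v = Sw wb v -> (Sw wa v + Sw wc v = n)%N ->
  exists y : Nsp A n, mv (val x) (val y) rem add.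
Proof.
move=> Hr v vE Hab Hac.
have vb : forall h, (v h <= n)%N.
  move=> h; case: (hap_cover h) => [e|[e|e]].
  - have := Sw_single v e; lia.
  - have := Sw_single v e; lia.
  - have := Sw_single v e; lia.
pose Y : cfg A n := [ffun h => inord (v h)].
have YE : forall h, (Y h : nat) = v h by move=> h; rewrite ffunE inordK //; have := vb h; lia.
have SwY : forall w, Sw w (fun h => Y h) = Sw w v.
  by move=> w; apply: eq_bigr => h _; rewrite YE.
have iY : inN Y.
  by rewrite /inN -Sw_a -Sw_b -Sw_c !SwY Hab eqxx /= -Hab Hac eqxx.
exists (exist _ Y iY); apply/mvP => h /=; rewrite YE vE.
rewrite subnK //; apply: leq_trans (Hr h) (leq_addr _ _).
Qed.
End Hap.

Section LamSec.
Variables (A : finType) (n : nat) (theta rho : R) (P : A -> A -> R) (eta : R).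
Implicit Types x y : Nsp A n.

Definition T1 x y : R := let X := val x in let Y := val y in let c := cnt x in
    \big[Rplus/0]_(i : A) \big[Rplus/0]_(j : A)
      (Defs.ind (mv X Y [:: ha i] [:: ha j]) *
        (/ eta * (c (ha i) * (/ 2 * c (ha j) + \big[Rplus/0]_(k : A) c (hc j k)))
         + theta / 2 * P i j * c (ha i))).
Definition T2 x y : R := let X := val x in let Y := val y in let c := cnt x in
    \big[Rplus/0]_(i : A) \big[Rplus/0]_(j : A)
      (Defs.ind (mv X Y [:: hb i] [:: hb j]) *
        (/ eta * (c (hb i) * (/ 2 * c (hb j) + \big[Rplus/0]_(k : A) c (hc k j)))
         + theta / 2 * P i j * c (hb i))).
Definition T3 x y : R := let X := val x in let Y := val y in let c := cnt x in
  \big[Rplus/0]_(i : A) \big[Rplus/0]_(j : A) \big[Rplus/0]_(k : A) \big[Rplus/0]_(l : A)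
      (Defs.ind (mv X Y [:: hc i j] [:: hc k l]) *
        (/ (2 * eta) * c (hc i j) * c (hc k l)
         + theta / 2 * (Defs.ind (i == k) * P j l + Defs.ind (j == l) * P i k) * c (hc i j))).
Definition T4 x y : R := let X := val x in let Y := val y in let c := cnt x in
  \big[Rplus/0]_(i : A) \big[Rplus/0]_(j : A)
      (Defs.ind (mv X Y [:: hc i j] [:: ha i; hb j]) * (rho / 2 * c (hc i j))).
Definition T5 x y : R := let X := val x in let Y := val y in let c := cnt x in
  \big[Rplus/0]_(i : A) \big[Rplus/0]_(j : A)
      (Defs.ind (mv X Y [:: ha i; hb j] [:: hc i j]) * (/ eta * c (ha i) * c (hb j))).

Lemma Lam_offE x y : Lam_off theta rho P eta x y = T1 x y + T2 x y + T3 x y + T4 x y + T5 x y.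
Proof. reflexivity. Qed.

Lemma ind_false (b : bool) (r : R) : (b -> False) -> Defs.ind b * r = 0.
Proof. by case: b => // H; [case: H | rewrite /Defs.ind Rmult_0_l]. Qed.

Lemma T123_zero x y : nc (val y) <> nc (val x) -> T1 x y + T2 x y + T3 x y = 0.
Proof.
move=> ne.
rewrite /T1 /T2 /T3 big1 ?[X in 0 + X]big1 ?[X in _ + X]big1; try lra.
- move=> i _; apply: big1 => j _; apply: big1 => k _; apply: big1 => l _.
  apply: ind_false => H; have := mv_inv (@wc _) H; rewrite !Sw_c /sl !big_cons !big_nil /=; move: ne; rewrite /=; lia.
- move=> i _; apply: big1 => j _.
  apply: ind_false => H; have := mv_inv (@wc _) H; rewrite !Sw_c /sl !big_cons !big_nil /=; move: ne; rewrite /=; lia.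
- move=> i _; apply: big1 => j _.
  apply: ind_false => H; have := mv_inv (@wc _) H; rewrite !Sw_c /sl !big_cons !big_nil /=; move: ne; rewrite /=; lia.
Qed.

Lemma T4_zero x y : (nc (val y)).+1 <> nc (val x) -> T4 x y = 0.
Proof.
move=> ne; rewrite /T4 big1 // => i _; apply: big1 => j _.
apply: ind_false => H; have := mv_inv (@wc _) H; rewrite !Sw_c /sl !big_cons !big_nil /=; move: ne; rewrite /=; lia.
Qed.

Lemma T5_zero x y : nc (val y) <> (nc (val x)).+1 -> T5 x y = 0.
Proof.
move=> ne; rewrite /T5 big1 // => i _; apply: big1 => j _.
apply: ind_false => H; have := mv_inv (@wc _) H; rewrite !Sw_c /sl !big_cons !big_nil /=; move: ne; rewrite /=; lia.
Qed.

Lemma sum_ind_mv x rem add r :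
  (r <> 0 -> exists y, mv (val x) (val y) rem add) ->
  \big[Rplus/0]_(y : Nsp A n) (Defs.ind (mv (val x) (val y) rem add) * r) = r.
Proof.
move=> H.
case: (Req_dec r 0) => [->|nz].
  by rewrite big1 // => y _; rewrite Rmult_0_r.
case: (H nz) => y0 Hy0.
rewrite (bigD1 y0) //= Hy0 /Defs.ind Rmult_1_l big1 ?Rplus_0_r // => y ne.
case E: (mv _ _ _ _); last by rewrite Rmult_0_l.
have := mv_uniq E Hy0 => e.
by have := val_inj e => e'; rewrite e' eqxx in ne.
Qed.

Lemma mv_exists2 x rem add : (forall h, count_mem h rem <= val x h)%N ->
  (sl (@wa A) add + sl (@wb A) rem = sl (@wb A) add + sl (@wa A) rem)%N ->
  (sl (@wa A) add + sl (@wc A) add = sl (@wa A) rem + sl (@wc A) rem)%N ->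
  exists y, mv (val x) (val y) rem add.
Proof.
move=> Hr E1 E2.
pose v := fun h => (val x h + count_mem h add - count_mem h rem)%N.
have Hv : forall h, (v h + count_mem h rem = val x h + count_mem h add)%N.
  by move=> h; rewrite /v subnK //; apply: leq_trans (Hr h) (leq_addr _ _).
have Ia := Sw_inv (@wa A) Hv; have Ib := Sw_inv (@wb A) Hv; have Ic := Sw_inv (@wc A) Hv.
rewrite Sw_a in Ia; rewrite Sw_b in Ib; rewrite Sw_c in Ic.
have ab := Nsp_ab x; have ac := Nsp_ac x.
apply: (@mv_exists _ _ x rem add Hr v) => //; lia.
Qed.

Lemma INR_sum (I : Type) (r : seq I) (Pr : pred I) (F : I -> nat) :
  INR (\sum_(i <- r | Pr i) F i)%N = \big[Rplus/0]_(i <- r | Pr i) INR (F i).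
Proof.
elim: r => [|i r IH]; first by rewrite !big_nil.
rewrite !big_cons; case: (Pr i) => //; by rewrite plus_INR IH.
Qed.

Lemma T4_sum x : \big[Rplus/0]_(y : Nsp A n) T4 x y = rho / 2 * INR (nc (val x)).
Proof.
rewrite /T4 exchange_big /=.
rewrite (eq_bigr (fun i => \big[Rplus/0]_(j : A) (rho / 2 * cnt x (hc i j)))); last first.
  move=> i _; rewrite exchange_big /=; apply: eq_bigr => j _.
  apply: sum_ind_mv => nz.
  have hx : (0 < val x (hc i j))%N.
    rewrite lt0n; apply/eqP => e; apply: nz; by rewrite /cnt e /= Rmult_0_r.
  apply: mv_exists2; rewrite /sl ?big_cons ?big_nil //=.
  move=> h; rewrite addn0; case: eqP => [<-|] //.
under eq_bigr => i _ do rewrite -big_distrr /=.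
rewrite -big_distrr /=; congr (_ * _).
rewrite /nc INR_sum (pair_bigA _ (fun i j => cnt x (hc i j))) /=.
by apply: eq_bigr => -[i j] _.
Qed.

Lemma T5_sum x : \big[Rplus/0]_(y : Nsp A n) T5 x y = / eta * INR (na (val x)) * INR (nb (val x)).
Proof.
rewrite /T5 exchange_big /=.
rewrite (eq_bigr (fun i => \big[Rplus/0]_(j : A) (/ eta * cnt x (ha i) * cnt x (hb j)))); last first.
  move=> i _; rewrite exchange_big /=; apply: eq_bigr => j _.
  apply: sum_ind_mv => nz.
  have hx : (0 < val x (ha i))%N.
    rewrite lt0n; apply/eqP => e; apply: nz; by rewrite /cnt e /= Rmult_0_r Rmult_0_l.
  have hy : (0 < val x (hb j))%N.
    rewrite lt0n; apply/eqP => e; apply: nz; by rewrite /cnt e /= Rmult_0_r.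
  apply: mv_exists2; rewrite /sl ?big_cons ?big_nil //=.
  move=> [[a|b]|p] /=; rewrite ?addn0.
  - by case: eqP => [<-|_] //; exact: hx.
  - by rewrite add0n; case: eqP => [<-|_] //; exact: hy.
  - by [].
transitivity (/ eta * \big[Rplus/0]_(i : A) \big[Rplus/0]_(j : A) (cnt x (ha i) * cnt x (hb j))).
  rewrite big_distrr /=; apply: eq_bigr => i _; rewrite big_distrr /=; apply: eq_bigr => j _; ring.
rewrite Rmult_assoc; congr (_ * _); rewrite /na /nb !INR_sum big_distrl /=.
by apply: eq_bigr => i _; rewrite big_distrr.
Qed.
End LamSec.

Lemma sum_restrict (S : finType) (Pr : pred S) (F : S -> R) :
  (forall y, ~~ Pr y -> F y = 0) -> \big[Rplus/0]_(y | Pr y) F y = \big[Rplus/0]_y F y.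
Proof.
move=> H; rewrite big_mkcond; apply: eq_bigr => y _; case: ifP => // /negbT /H ->; done.
Qed.

Section LumpLam.
Variables (A : finType) (n : nat) (theta rho : R) (P : A -> A -> R) (eta : R).

Lemma cc_eq (y : Nsp A n) (c : 'I_n.+1) : (ccount y == c) = (nc (val y) == c :> nat).
Proof. by rewrite -val_eqE /= ccountE. Qed.

Lemma Lam_lump : lump (@ccount A n) (Lam theta rho P eta) (@Gam n rho eta).
Proof.
move=> x c.
set m := nc (val x).
have T4s := T4_sum rho x; have T5s := T5_sum eta x.
have ab := Nsp_ab x; have ac := Nsp_ac x.
have guE : gu n eta m = / eta * INR (na (val x)) * INR (nb (val x)).
  have e : (n - m = na (val x))%N by rewrite -{1}ac /m addnK.
  rewrite /gu -ab e; move: (INR (na _)) => a; rewrite /Rdiv /=; ring.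
rewrite Gam_split ccountE -/m.
case: (eqVneq (c : nat) m) => [cm|cn].
- have ccx : ccount x == c by rewrite cc_eq cm.
  pose T123 y := T1 theta P eta x y + T2 theta P eta x y + T3 theta P eta x y.
  have E1 : \big[Rplus/0]_(y | (ccount y == c) && (y != x)) Lam theta rho P eta x y
          = \big[Rplus/0]_(y | (ccount y == c) && (y != x)) T123 y.
    apply: eq_bigr => y /andP[cy ny]; rewrite /Lam eq_sym (negbTE ny) Lam_offE /T123.
    rewrite cc_eq cm in cy; move/eqP: cy => cy.
    rewrite T4_zero; last by rewrite cy /m => /esym /n_Sn.
    rewrite T5_zero; last by rewrite cy /m; apply: n_Sn.
    ring.
  have E2 : Lam theta rho P eta x x = - (\big[Rplus/0]_(y | (ccount y == c) && (y != x)) T123 y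
            + (rho / 2 * INR m + / eta * INR (na (val x)) * INR (nb (val x)))).
    rewrite /Lam eqxx; congr (- _).
    rewrite (eq_bigr (fun y => T123 y + (T4 rho x y + T5 eta x y))); last first.
      by move=> y _; rewrite Lam_offE /T123; ring.
    rewrite big_split /=; congr (_ + _).
      rewrite (bigID (fun y => ccount y == c)) /=.
      rewrite [X in _ + X]big1; last first.
        move=> y /andP[_ cy]; apply: T123_zero; rewrite cc_eq cm in cy; move/eqP: cy => cy; exact: cy.
      rewrite Rplus_0_r; apply: eq_bigl => y; by rewrite andbC.
    rewrite (sum_restrict (Pr := fun y => y != x)); last first.
      move=> y; rewrite negbK => /eqP ->; rewrite T4_zero ?T5_zero; [ring | apply: n_Sn | move=> /esym /n_Sn //].
    by rewrite big_split /= T4s T5s.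
  rewrite (bigD1 x) //= E1 E2 -guE /gd.
  have -> : ((c : nat) == m.+1) = false by lia.
  have -> : ((c : nat).+1 == m) = false by lia.
  move: (INR m) (gu n eta m) (\big[Rplus/0]_(y | (ccount y == c) && (y != x)) T123 y) => a b d.
  ring.
- rewrite (eq_bigr (fun y => T4 rho x y + T5 eta x y)); last first.
    move=> y cy; rewrite cc_eq in cy; move/eqP: cy => cy.
    have ne : (x == y) = false.
      by apply/eqP => e; move: cn; rewrite -cy -e /m eqxx.
    rewrite /Lam ne Lam_offE T123_zero; last by rewrite cy; apply/eqP.
    ring.
  have S4 : \big[Rplus/0]_(y | ccount y == c) T4 rho x y = if (c : nat).+1 == m then gd rho m else 0.
    case: ifP => /eqP h.
      rewrite sum_restrict ?T4s // => y ny; apply: T4_zero => e; move: ny; rewrite cc_eq.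
      rewrite -/m -h in e; case: e => ->; by rewrite eqxx.
    rewrite big1 // => y; rewrite cc_eq => /eqP cy; apply: T4_zero; rewrite cy -/m; exact: h.
  have S5 : \big[Rplus/0]_(y | ccount y == c) T5 eta x y = if (c : nat) == m.+1 then gu n eta m else 0.
    case: ifP => /eqP h.
      rewrite sum_restrict ?T5s ?guE // => y ny; apply: T5_zero => e; move: ny; rewrite cc_eq.
      by rewrite e h -/m eqxx.
    rewrite big1 // => y; rewrite cc_eq => /eqP cy; apply: T5_zero; rewrite cy -/m; exact: h.
  rewrite big_split /= S4 S5; ring.
Qed.
End LumpLam.

Unset Implicit Arguments.

Theorem mainTheorem2 (A : finType) (n : nat) (theta rho : R) (P : A -> A -> R)
    (D : nat) (tb : nat -> R) (eta : nat -> R) :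
  (1 <= n)%N ->
  0 <= theta -> 0 <= rho ->
  (forall i j, 0 <= P i j) -> (forall i, \big[Rplus/0]_(j : A) P i j = 1) ->
  (0 < D)%N ->
  (forall d, (1 <= d)%N -> (d.+1 < D)%N -> tb d < tb d.+1) ->
  ((1 < D)%N -> tb D.-1 < 0) ->
  (forall d, (d < D)%N -> 0 < eta d) ->
  (* (1) the count C_t of type-c haplotypes is a Markov jump process with
     generator Gamma^d on epoch d: for any starting time u and any initial
     distribution pi of M_u, the finite-dimensional distributions of C_t
     are those of the Markov process with generators Gamma^d started from
     the law of C_u. *)
  (forall (u : R) (pi : Nsp A n -> R),
     u <= 0 ->
     (forall x, 0 <= pi x) -> \big[Rplus/0]_(x : Nsp A n) pi x = 1 ->
     forall (ts : seq R) (cs : seq 'I_n.+1),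
       times_ok u ts ->
       fdd (@ccount A n) (trans D tb (fun d => Lam theta rho P (eta d))) u pi ts cs
       = fdd (fun m : 'I_n.+1 => m) (trans D tb (fun d => @Gam n rho (eta d))) u
             (pushfwd (@ccount A n) pi) ts cs)
  /\
  (* (2) reversibility of e^{Gamma^d s} w.r.t. the stationary distribution *)
  (0 < rho ->
   forall d, (d < D)%N ->
   forall gam : 'I_n.+1 -> R,
     (forall m, 0 <= gam m) -> \big[Rplus/0]_(m : 'I_n.+1) gam m = 1 ->
     (forall m', \big[Rplus/0]_(m : 'I_n.+1) (gam m * @Gam n rho (eta d) m m') = 0) ->
     forall (s : R), 0 <= s -> forall m m' : 'I_n.+1,
       gam m * mexp (@Gam n rho (eta d)) s m m'
       = gam m' * mexp (@Gam n rho (eta d)) s m' m).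

Proof.
move=> _ _ _ _ _ _ _ _ _; split.
  move=> u pi _ _ _ ts cs _.
  apply: fdd_lump; apply: trans_lump => d; exact: Lam_lump.
move=> _ d _ gam _ _ stat s _ m m'.
apply: mexp_rev => a b; exact: detailed.
Qed.
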